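(* Let $\{G_i\}_{i\in I}$ be a family of perfect groups (i.e. $G_i=G_i'$ for all $i$). Let $\mathcal{V}$ be either the variety of abelian groups, or a variety $\mathcal{N}_c$ of nilpotent groups of class at most $c$ ($c\ge1$), or a polynilpotent variety $\mathcal{N}_{c_1,\dots,c_s}$. Then $\prod_{i\in I}G_i$ is $\mathcal{V}$-capable if and only if each $G_i$ is $\mathcal{V}$-capable.
   Context: $\prod_{i\in I}G_i$ is the restricted direct product (elements with only finitely many nontrivial coordinates). $\mathcal{N}_{c_1,\dots,c_s}$ is the variety of groups $G$ with $\gamma_{c_s+1}(\cdots\gamma_{c_1+1}(G)\cdots)=1$, $\gamma_k$ the lower central series. For a variety $\mathcal{V}$ with laws $V$, the marginal subgroup $V^*(E)$ of a group $E$ is the set of $g\in E$ with $v(x_1,\dots,gx_i,\dots,x_n)=v(x_1,\dots,x_n)$ for all laws $v\in V$, all $x_j\in E$ and all $i$; $G$ is $\mathcal{V}$-capable if $G\cong E/V^*(E)$ for some group $E$ (for the abelian variety this is ordinary capability, $G\cong E/Z(E)$). *)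

(* Defs.v *)
From Stdlib Require Import List Arith PeanoNat ProofIrrelevance FunctionalExtensionality.
Import ListNotations.
Set Implicit Arguments.

Record group := Group {
  carrier :> Type;
  gmul : carrier -> carrier -> carrier;
  ginv : carrier -> carrier;
  gone : carrier;
  gmulA : forall x y z, gmul x (gmul y z) = gmul (gmul x y) z;
  gmul1l : forall x, gmul gone x = x;
  gmul1r : forall x, gmul x gone = x;
  gmulVl : forall x, gmul (ginv x) x = gone;
  gmulVr : forall x, gmul x (ginv x) = gone }.
Arguments gmul {g}. Arguments ginv {g}. Arguments gone {g}.

Definition is_hom (E G : group) (f : E -> G) : Prop :=
  forall x y, f (gmul x y) = gmul (f x) (f y).
Arguments is_hom {E G}.

Definition comm (E : group) (x y : E) : E :=
  gmul (gmul (gmul (ginv x) (ginv y)) x) y.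
Arguments comm {E}.

(** Left-normed commutator [x_0, x_1, ..., x_c]  (the word defining N_c). *)
Fixpoint lcomm (E : group) (c : nat) (x : nat -> E) : E :=
  match c with
  | 0 => x 0
  | S c' => @comm E (lcomm E c' x) (x (S c'))
  end.
Arguments lcomm {E}.

(** Polynilpotent word for N_{c_1,...,c_s}, cs = [c_1; ...; c_s].
    A word is represented together with its number of variables n;
    step c (n, w) = (  (c+1) n,  [w(x_0..x_{n-1}), w(x_n..), ..., w(x_{cn}..)] ). *)
Definition pstep (E : group) (p : nat * ((nat -> E) -> E)) (c : nat)
  : nat * ((nat -> E) -> E) :=
  let (n, w) := p in
  (S c * n, fun x => lcomm c (fun j => w (fun k => x (j * n + k)))).

Definition polyword (cs : list nat) (E : group) : (nat -> E) -> E :=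
  snd (fold_left (@pstep E) cs (1, fun x : nat -> E => x 0)).
Arguments polyword cs {E}.

Definition upd (E : group) (x : nat -> E) (i : nat) (a : E) : nat -> E :=
  fun k => if Nat.eqb k i then a else x k.
Arguments upd {E}.

Definition marginal (cs : list nat) (E : group) (g : E) : Prop :=
  forall (x : nat -> E) (i : nat),
    polyword cs (upd x i (gmul g (x i))) = polyword cs x.
Arguments marginal cs {E}.

(** G is V-capable: G is isomorphic to E / V*(E) for some group E, i.e.
    there is a surjective homomorphism E -> G whose kernel is V*(E). *)
Definition capable (cs : list nat) (G : group) : Prop :=
  exists (E : group) (f : E -> G),
    is_hom f /\ (forall y : G, exists e, f e = y) /\
    (forall e : E, f e = gone <-> marginal cs e).

Fixpoint prod_list (E : group) (l : list E) : E :=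
  match l with [] => gone | a :: l' => gmul a (prod_list E l') end.
Arguments prod_list {E}.

Definition perfect (G : group) : Prop :=
  forall x : G, exists l : list (G * G),
    x = prod_list (map (fun p => comm (fst p) (snd p)) l).

Section RDP.
Variables (I : Type) (G : I -> group).

Definition fin_supp (f : forall i, G i) : Prop :=
  exists l : list I, forall i, ~ In i l -> f i = gone.

Definition rdp_car := { f : forall i, G i | fin_supp f }.

Lemma ginv1 (H : group) : ginv (@gone H) = gone.
Proof. rewrite <- (gmul1l H (ginv gone)). apply gmulVr. Qed.

Lemma fin_supp_mul (f g : forall i, G i) :
  fin_supp f -> fin_supp g -> fin_supp (fun i => gmul (f i) (g i)).
Proof.
  intros [l1 H1] [l2 H2]. exists (l1 ++ l2). intros i Hi.
  rewrite H1, H2. apply gmul1l.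
  - intro; apply Hi; apply in_or_app; right; auto.
  - intro; apply Hi; apply in_or_app; left; auto.
Qed.

Lemma fin_supp_inv (f : forall i, G i) :
  fin_supp f -> fin_supp (fun i => ginv (f i)).
Proof. intros [l H]. exists l. intros i Hi. rewrite H by auto. apply ginv1. Qed.

Lemma fin_supp_one : fin_supp (fun i => gone).
Proof. exists nil. auto. Qed.

Definition rdp_mul (a b : rdp_car) : rdp_car :=
  exist _ (fun i => gmul (proj1_sig a i) (proj1_sig b i))
    (fin_supp_mul (proj2_sig a) (proj2_sig b)).
Definition rdp_inv (a : rdp_car) : rdp_car :=
  exist _ (fun i => ginv (proj1_sig a i)) (fin_supp_inv (proj2_sig a)).
Definition rdp_one : rdp_car := exist _ (fun i => gone) fin_supp_one.

Lemma rdp_eq (a b : rdp_car) : proj1_sig a = proj1_sig b -> a = b.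
Proof.
  destruct a as [f p], b as [g q]; simpl; intros ->.
  f_equal; apply proof_irrelevance.
Qed.

Ltac rdp_solve lem :=
  apply rdp_eq; simpl; apply functional_extensionality_dep; intro; apply lem.

Lemma rdp_mulA x y z : rdp_mul x (rdp_mul y z) = rdp_mul (rdp_mul x y) z.
Proof. rdp_solve gmulA. Qed.
Lemma rdp_mul1l x : rdp_mul rdp_one x = x.
Proof. rdp_solve gmul1l. Qed.
Lemma rdp_mul1r x : rdp_mul x rdp_one = x.
Proof. rdp_solve gmul1r. Qed.
Lemma rdp_mulVl x : rdp_mul (rdp_inv x) x = rdp_one.
Proof. rdp_solve gmulVl. Qed.
Lemma rdp_mulVr x : rdp_mul x (rdp_inv x) = rdp_one.
Proof. rdp_solve gmulVr. Qed.

Definition rdp : group :=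
  @Group rdp_car rdp_mul rdp_inv rdp_one rdp_mulA rdp_mul1l rdp_mul1r rdp_mulVl rdp_mulVr.
End RDP.

(* Main.v *)
Require Import Defs.
From Stdlib Require Import List Arith PeanoNat Lia ProofIrrelevance FunctionalExtensionality Classical ClassicalEpsilon.
Import ListNotations.
Set Implicit Arguments.

Section GL.
Context {E : group}.
Lemma mulKl (x y : E) : gmul (ginv x) (gmul x y) = y.
Proof. rewrite gmulA, gmulVl. apply gmul1l. Qed.
Lemma mulKr (x y : E) : gmul x (gmul (ginv x) y) = y.
Proof. rewrite gmulA, gmulVr. apply gmul1l. Qed.
Lemma inv_unique (x y : E) : gmul x y = gone -> y = ginv x.
Proof. intro H. rewrite <- (mulKl x y), H. apply gmul1r. Qed.
Lemma ginv_mul (x y : E) : ginv (gmul x y) = gmul (ginv y) (ginv x).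
Proof. symmetry. apply inv_unique. rewrite <- gmulA, mulKr. apply gmulVr. Qed.
Lemma ginv_inv (x : E) : ginv (ginv x) = x.
Proof. symmetry. apply inv_unique. apply gmulVl. Qed.
Lemma ginv_one : ginv (@gone E) = gone.
Proof. symmetry. apply inv_unique. apply gmul1l. Qed.
End GL.

Ltac gsimpl := repeat first [ rewrite <- gmulA | rewrite gmul1l | rewrite gmul1r
  | rewrite gmulVl | rewrite gmulVr | rewrite mulKl | rewrite mulKr
  | rewrite ginv_mul | rewrite ginv_inv | rewrite ginv_one ].

Definition gconj (E : group) (h x : E) : E := gmul (gmul (ginv h) x) h.
Arguments gconj {E}.

Lemma hom_one (E H : group) (f : E -> H) : is_hom f -> f gone = gone.
Proof. intro hf. pose proof (hf gone gone) as K. rewrite gmul1l in K.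
  rewrite <- (mulKl (f gone) (f gone)), <- K. gsimpl. reflexivity. Qed.
Lemma hom_inv (E H : group) (f : E -> H) : is_hom f -> forall x, f (ginv x) = ginv (f x).
Proof. intros hf x. apply inv_unique. rewrite <- hf, gmulVr. apply hom_one; auto. Qed.
Lemma hom_comm (E H : group) (f : E -> H) : is_hom f -> forall x y, f (comm x y) = comm (f x) (f y).
Proof. intros hf x y. unfold comm. rewrite !hf, !(hom_inv hf). reflexivity. Qed.
Lemma hom_conj (E H : group) (f : E -> H) : is_hom f -> forall x y, f (gconj x y) = gconj (f x) (f y).
Proof. intros hf x y. unfold gconj. rewrite !hf, !(hom_inv hf). reflexivity. Qed.
Lemma conj_hom (E : group) (h : E) : is_hom (gconj h).
Proof. intros x y. unfold gconj. gsimpl. reflexivity. Qed.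

Lemma lcomm_ext (E : group) c (x y : nat -> E) : (forall j, j <= c -> x j = y j) -> lcomm c x = lcomm c y.
Proof. induction c; simpl; intros H. apply H; lia.
  rewrite IHc by (intros; apply H; lia). rewrite (H (S c)) by lia. reflexivity. Qed.
Lemma lcomm_hom (E H : group) (f : E -> H) (hf : is_hom f) c x :
  f (lcomm c x) = lcomm c (fun j => f (x j)).
Proof. induction c; simpl; auto. rewrite (hom_comm hf), IHc. reflexivity. Qed.

Lemma fold_hom (E H : group) (f : E -> H) (hf : is_hom f) cs :
  forall (p : nat * ((nat -> E) -> E)) (q : nat * ((nat -> H) -> H)),
  fst p = fst q -> (forall x, snd q (fun k => f (x k)) = f (snd p x)) ->
  fst (fold_left (@pstep H) cs q) = fst (fold_left (@pstep E) cs p) /\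
  forall x, snd (fold_left (@pstep H) cs q) (fun k => f (x k)) = f (snd (fold_left (@pstep E) cs p) x).
Proof. induction cs as [|c cs IH]; simpl; intros p q H1 H2. auto.
  apply IH; destruct p as [n w], q as [n' w']; simpl in *; subst; auto.
  intro x. rewrite lcomm_hom by auto. apply lcomm_ext. intros j _.
  apply (H2 (fun k => x (j * n' + k))). Qed.

Lemma poly_hom cs (E H : group) (f : E -> H) (hf : is_hom f) (x : nat -> E) :
  polyword cs (fun k => f (x k)) = f (polyword cs x).
Proof. unfold polyword. apply fold_hom; auto. Qed.

Definition pN cs (E : group) := fst (fold_left (@pstep E) cs (1, fun x : nat -> E => x 0)).

Lemma fold_dep (E : group) cs : forall (p : nat * ((nat -> E) -> E)),
  1 <= fst p -> (forall x y, (forall k, k < fst p -> x k = y k) -> snd p x = snd p y) ->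
  1 <= fst (fold_left (@pstep E) cs p) /\
  (forall x y, (forall k, k < fst (fold_left (@pstep E) cs p) -> x k = y k) ->
     snd (fold_left (@pstep E) cs p) x = snd (fold_left (@pstep E) cs p) y).
Proof. induction cs as [|c cs IH]; simpl; intros p H1 H2. auto.
  apply IH; destruct p as [n w]; simpl in *. nia.
  intros x y Hxy. apply lcomm_ext. intros j Hj. apply H2. intros k Hk. apply Hxy. nia. Qed.

Lemma poly_dep cs (E : group) (x y : nat -> E) :
  (forall k, k < pN cs E -> x k = y k) -> polyword cs x = polyword cs y.
Proof. unfold polyword, pN. intros. apply fold_dep; simpl; auto; intros x0 y0 Hk; apply Hk; lia. Qed.

Lemma poly_ext cs (E : group) (x y : nat -> E) : (forall k, x k = y k) -> polyword cs x = polyword cs y.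
Proof. intros H. apply poly_dep; auto. Qed.

Lemma upd_map (E H : group) (g : E -> H) (x : nat -> E) k a :
  forall t, g (upd x k a t) = upd (fun t => g (x t)) k (g a) t.
Proof. intro t. unfold upd. destruct (Nat.eqb t k); auto. Qed.

Lemma same_image cs (E G : group) (f : E -> G) (hf : is_hom f)
  (hk : forall e, f e = gone -> marginal cs e) (x y : nat -> E) :
  (forall t, f (x t) = f (y t)) -> polyword cs x = polyword cs y.
Proof. intros Hxy.
  set (z := fun t k => if Nat.ltb k t then x k else y k).
  assert (forall t, polyword cs (z t) = polyword cs y).
  { induction t. apply poly_ext. intro k. unfold z. destruct k; reflexivity.
    rewrite <- IHt.
    set (m := gmul (x t) (ginv (y t))).
    assert (Hm : marginal cs m). { apply hk. unfold m. rewrite hf, (hom_inv hf), Hxy. apply gmulVr. }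
    rewrite <- (Hm (z t) t). apply poly_ext. intro k. unfold upd, z, m.
    destruct (Nat.eqb_spec k t). subst. rewrite (proj2 (Nat.ltb_lt t (S t))) by lia.
    rewrite (proj2 (Nat.ltb_ge t t)) by lia. gsimpl. reflexivity.
    destruct (Nat.ltb_spec k (S t)), (Nat.ltb_spec k t); auto; lia. }
  rewrite <- (H (pN cs E)). apply poly_dep. intros k Hk. unfold z.
  rewrite (proj2 (Nat.ltb_lt _ _)) by auto. reflexivity. Qed.

Inductive Gen (G : group) (S : G -> Prop) : G -> Prop :=
| gen_in x : S x -> Gen G S x
| gen_one : Gen G S gone
| gen_mul x y : Gen G S x -> Gen G S y -> Gen G S (gmul x y)
| gen_inv x : Gen G S x -> Gen G S (ginv x).
Arguments Gen {G}.

Lemma Gen_mono (G : group) (S T : G -> Prop) : (forall x, S x -> T x) -> forall x, Gen S x -> Gen T x.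
Proof. intros H x Hx. induction Hx; [apply gen_in; auto|apply gen_one|apply gen_mul; auto|apply gen_inv; auto]. Qed.

Lemma Gen_conj (G : group) (S : G -> Prop) : (forall h x, S x -> S (gconj h x)) ->
  forall h x, Gen S x -> Gen S (gconj h x).
Proof. intros HS h x Hx. induction Hx.
  - apply gen_in; auto.
  - replace (gconj h gone) with (@gone G) by (unfold gconj; gsimpl; reflexivity). apply gen_one.
  - rewrite conj_hom. apply gen_mul; auto.
  - replace (gconj h (ginv x)) with (ginv (gconj h x)) by (unfold gconj; gsimpl; reflexivity).
    apply gen_inv; auto.
Qed.

Lemma comm_gen (G : group) (hp : perfect G) (U L : G -> Prop)
  (hU : forall h x, U x -> U (gconj h x)) (hL : forall h x, L x -> L (gconj h x))
  (gU : forall x, Gen U x) (gL : forall x, Gen L x) :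
  forall g, Gen (fun z => exists a b, L a /\ U b /\ z = comm a b) g.
Proof.
  set (T := fun z => exists a b, L a /\ U b /\ z = comm a b).
  assert (hT : forall h x, T x -> T (gconj h x)).
  { intros h x (a & b & Ha & Hb & ->). exists (gconj h a), (gconj h b). repeat split; auto.
    unfold gconj, comm. gsimpl. reflexivity. }
  assert (K : forall x, Gen L x -> forall y, Gen U y -> Gen T (comm x y)).
  { intros x Hx. induction Hx as [x Hx| |x1 x2 _ IH1 _ IH2|x1 _ IH].
    - intros y Hy. induction Hy as [y Hy| |y1 y2 _ IH1 _ IH2|y1 _ IH].
      + apply gen_in. exists x, y; auto.
      + replace (comm x gone) with (@gone G) by (unfold comm; gsimpl; reflexivity). apply gen_one.
      + replace (comm x (gmul y1 y2)) with (gmul (comm x y2) (gconj y2 (comm x y1)))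
          by (unfold comm, gconj; gsimpl; reflexivity).
        apply gen_mul; auto. apply Gen_conj; auto.
      + replace (comm x (ginv y1)) with (ginv (gconj (ginv y1) (comm x y1)))
          by (unfold comm, gconj; gsimpl; reflexivity).
        apply gen_inv; auto. apply Gen_conj; auto.
    - intros y _. replace (comm gone y) with (@gone G) by (unfold comm; gsimpl; reflexivity). apply gen_one.
    - intros y Hy. replace (comm (gmul x1 x2) y) with (gmul (gconj x2 (comm x1 y)) (comm x2 y))
          by (unfold comm, gconj; gsimpl; reflexivity).
      apply gen_mul; auto. apply Gen_conj; auto.
    - intros y Hy. replace (comm (ginv x1) y) with (ginv (gconj (ginv x1) (comm x1 y)))
          by (unfold comm, gconj; gsimpl; reflexivity).
      apply gen_inv; auto. apply Gen_conj; auto. }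
  intro g. destruct (hp g) as [l ->]. induction l as [|[a b] l IH]; simpl.
  apply gen_one. apply gen_mul; auto.
Qed.

Lemma Lc_gen (G : group) (hp : perfect G) (U : G -> Prop)
  (hU : forall h x, U x -> U (gconj h x)) (gU : forall x, Gen U x) :
  forall c, (forall h x, (exists u, (forall j, j <= c -> U (u j)) /\ x = lcomm c u) ->
                     (exists u, (forall j, j <= c -> U (u j)) /\ gconj h x = lcomm c u)) /\
            (forall g, Gen (fun z => exists u, (forall j, j <= c -> U (u j)) /\ z = lcomm c u) g).
Proof.
  induction c as [|c [IH1 IH2]].
  - split.
    + intros h x (u & Hu & ->). exists (fun j => gconj h (u j)). simpl. split; auto.
    + intro g. apply Gen_mono with (2 := gU g). intros x Hx. exists (fun _ => x). simpl. split; auto.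
  - split.
    + intros h x (u & Hu & ->). exists (fun j => gconj h (u j)). split.
      intros j Hj. apply hU, Hu; auto. apply lcomm_hom. apply conj_hom.
    + intro g. refine (Gen_mono _ _ (comm_gen hp hU IH1 gU IH2 g)).
      intros z (a & b & (u & Hu & ->) & Hb & ->).
      exists (fun j => if Nat.eqb j (S c) then b else u j). split.
      * intros j Hj. destruct (Nat.eqb_spec j (S c)); auto. apply Hu. lia.
      * simpl. rewrite Nat.eqb_refl. f_equal. apply lcomm_ext. intros j Hj.
        destruct (Nat.eqb_spec j (S c)); auto; lia.
Qed.

Definition Inv {G : group} (p : nat * ((nat -> G) -> G)) : Prop :=
  1 <= fst p /\
  (forall x y, (forall k, k < fst p -> x k = y k) -> snd p x = snd p y) /\
  (forall h x, gconj h (snd p x) = snd p (fun k => gconj h (x k))) /\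
  (forall g, Gen (fun z => exists x, z = snd p x) g).

Lemma Inv_step (G : group) (hp : perfect G) (p : nat * ((nat -> G) -> G)) c : Inv p -> Inv (pstep G p c).
Proof.
  destruct p as [n w]. intros (H1 & H2 & H3 & H4). simpl in *.
  set (U := fun z => exists x, z = w x).
  assert (hU : forall h x, U x -> U (gconj h x)).
  { intros h x [y ->]. exists (fun k => gconj h (y k)). auto. }
  destruct (Lc_gen hp hU H4 c) as [_ HL].
  unfold Inv; simpl. split; [nia|]. split; [|split].
  - intros x y Hxy. apply lcomm_ext. intros j Hj. apply H2. intros k Hk. apply Hxy. nia.
  - intros h x. rewrite lcomm_hom by apply conj_hom. apply lcomm_ext. intros j _. apply H3.
  - intro g. refine (Gen_mono _ _ (HL g)). intros z (u & Hu & ->).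
    assert (HY : forall j, exists y, j <= c -> u j = w y).
    { intro j. destruct (le_lt_dec j c) as [Hj|Hj].
      destruct (Hu j Hj) as [y Hy]. exists y; auto. exists (fun _ => gone). intro; lia. }
    set (Y := fun j => proj1_sig (constructive_indefinite_description _ (HY j))).
    assert (HYs : forall j, j <= c -> u j = w (Y j)).
    { intro j. unfold Y. destruct (constructive_indefinite_description _ (HY j)). simpl. auto. }
    exists (fun t => Y (t / n) (t - (t / n) * n)).
    apply lcomm_ext. intros j Hj. rewrite HYs by auto. apply H2. intros k Hk.
    assert (E1 : (j * n + k) / n = j).
    { rewrite Nat.div_add_l by lia. rewrite Nat.div_small by lia. lia. }
    rewrite E1. f_equal. lia.
Qed.

Lemma perfect_gen (G : group) (hp : perfect G) cs :
  forall g : G, Gen (fun z : G => exists x, z = polyword cs x) g.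
Proof.
  unfold polyword.
  assert (forall cs p, Inv p -> Inv (fold_left (@pstep G) cs p)).
  { induction cs0 as [|c cs0 IH]; simpl; auto. intros p Hp. apply IH. apply Inv_step; auto. }
  apply H. split; simpl; [lia|]. split; [|split].
  - intros x y Hxy. apply Hxy. lia.
  - reflexivity.
  - intro g. apply gen_in. exists (fun _ => g). reflexivity.
Qed.

Section Sub.
Variables (E : group) (P : E -> Prop) (P1 : P gone)
  (PM : forall x y, P x -> P y -> P (gmul x y)) (PI : forall x, P x -> P (ginv x)).
Definition sub_car := {x : E | P x}.
Definition sub_mul (a b : sub_car) : sub_car :=
  exist _ (gmul (proj1_sig a) (proj1_sig b)) (PM (proj2_sig a) (proj2_sig b)).
Definition sub_inv (a : sub_car) : sub_car := exist _ (ginv (proj1_sig a)) (PI (proj2_sig a)).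
Definition sub_one : sub_car := exist _ gone P1.
Lemma sub_eq (a b : sub_car) : proj1_sig a = proj1_sig b -> a = b.
Proof. destruct a, b; simpl; intros ->. f_equal. apply proof_irrelevance. Qed.
Lemma sub_mulA x y z : sub_mul x (sub_mul y z) = sub_mul (sub_mul x y) z.
Proof. apply sub_eq, gmulA. Qed.
Lemma sub_mul1l x : sub_mul sub_one x = x.
Proof. apply sub_eq, gmul1l. Qed.
Lemma sub_mul1r x : sub_mul x sub_one = x.
Proof. apply sub_eq, gmul1r. Qed.
Lemma sub_mulVl x : sub_mul (sub_inv x) x = sub_one.
Proof. apply sub_eq, gmulVl. Qed.
Lemma sub_mulVr x : sub_mul x (sub_inv x) = sub_one.
Proof. apply sub_eq, gmulVr. Qed.
Definition subgrp : group := @Group sub_car sub_mul sub_inv sub_one sub_mulA sub_mul1l sub_mul1r sub_mulVl sub_mulVr.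
Lemma sub_incl_hom : is_hom (fun a : subgrp => proj1_sig a).
Proof. intros x y. reflexivity. Qed.
End Sub.

Section Prod.
Variables (E H : group).
Definition pr_mul (a b : E * H) : E * H := (gmul (fst a) (fst b), gmul (snd a) (snd b)).
Definition pr_inv (a : E * H) : E * H := (ginv (fst a), ginv (snd a)).
Definition pr_one : E * H := (gone, gone).
Lemma pr_mulA x y z : pr_mul x (pr_mul y z) = pr_mul (pr_mul x y) z.
Proof. unfold pr_mul; simpl. rewrite !gmulA. reflexivity. Qed.
Lemma pr_mul1l x : pr_mul pr_one x = x.
Proof. destruct x; unfold pr_mul; simpl. rewrite !gmul1l. reflexivity. Qed.
Lemma pr_mul1r x : pr_mul x pr_one = x.
Proof. destruct x; unfold pr_mul; simpl. rewrite !gmul1r. reflexivity. Qed.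
Lemma pr_mulVl x : pr_mul (pr_inv x) x = pr_one.
Proof. destruct x; unfold pr_mul; simpl. rewrite !gmulVl. reflexivity. Qed.
Lemma pr_mulVr x : pr_mul x (pr_inv x) = pr_one.
Proof. destruct x; unfold pr_mul; simpl. rewrite !gmulVr. reflexivity. Qed.
Definition prodgrp : group := @Group (E * H) pr_mul pr_inv pr_one pr_mulA pr_mul1l pr_mul1r pr_mulVl pr_mulVr.
End Prod.

Lemma rdp_proj_hom (I : Type) (G : I -> group) (j : I) : is_hom (fun a : rdp G => proj1_sig a j).
Proof. intros x y. reflexivity. Qed.

Definition delta_fun (I : Type) (G : I -> group) (i : I) (y : G i) : forall j, G j :=
  fun j => match excluded_middle_informative (i = j) with
           | left e => eq_rect i (fun k => carrier (G k)) y j e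
           | right _ => gone end.
Lemma delta_supp (I : Type) (G : I -> group) (i : I) (y : G i) : fin_supp G (delta_fun G i y).
Proof. exists [i]. intros j Hj. unfold delta_fun.
  destruct (excluded_middle_informative (i = j)); auto. subst. exfalso. apply Hj. left; auto. Qed.
Definition delta (I : Type) (G : I -> group) (i : I) (y : G i) : rdp G :=
  exist _ (delta_fun G i y) (delta_supp G i y).
Lemma delta_at (I : Type) (G : I -> group) (i : I) (y : G i) : proj1_sig (delta G i y) i = y.
Proof. simpl. unfold delta_fun. destruct (excluded_middle_informative (i = i)) as [e|n].
  rewrite (proof_irrelevance _ e eq_refl). reflexivity. contradiction. Qed.
Lemma delta_off (I : Type) (G : I -> group) (i j : I) (y : G i) : j <> i -> proj1_sig (delta G i y) j = gone.
Proof. intro H. simpl. unfold delta_fun. destruct (excluded_middle_informative (i = j)); auto.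
  subst; contradiction. Qed.

Lemma dir2 (I : Type) (G : I -> group) (cs : list nat) :
  (forall i, capable cs (G i)) -> capable cs (rdp G).
Proof.
  intro H.
  pose (HE := fun i => constructive_indefinite_description _ (H i)).
  pose (Ei := fun i => proj1_sig (HE i)).
  pose (Hf := fun i => constructive_indefinite_description _ (proj2_sig (HE i))).
  pose (fi := fun i => proj1_sig (Hf i) : Ei i -> G i).
  assert (Hfi : forall i, is_hom (fi i) /\ (forall y : G i, exists e, fi i e = y) /\
                (forall e, fi i e = gone <-> marginal cs e)).
  { intro i. exact (proj2_sig (Hf i)). }
  clearbody fi. clear Hf.
  assert (supF : forall a : rdp Ei, fin_supp G (fun i => fi i (proj1_sig a i))).
  { intros [a [l Hl]]. exists l. intros i Hi. simpl. rewrite Hl by auto. apply hom_one, Hfi. }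
  exists (rdp Ei), (fun a => exist _ _ (supF a)). split; [|split].
  - intros a b. apply rdp_eq. simpl. apply functional_extensionality_dep. intro i. apply Hfi.
  - intros y.
    assert (HS : forall i, exists e : Ei i, (proj1_sig y i = gone -> e = gone) /\ fi i e = proj1_sig y i).
    { intro i. destruct (classic (proj1_sig y i = gone)) as [Hy|Hy].
      exists gone. split; auto. rewrite Hy. apply hom_one, Hfi.
      destruct (proj1 (proj2 (Hfi i)) (proj1_sig y i)) as [e He]. exists e. split; auto.
      intro; contradiction. }
    pose (e := fun i => proj1_sig (constructive_indefinite_description _ (HS i))).
    assert (He : forall i, (proj1_sig y i = gone -> e i = gone) /\ fi i (e i) = proj1_sig y i).
    { intro i. exact (proj2_sig (constructive_indefinite_description _ (HS i))). }
    clearbody e.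
    assert (supe : fin_supp Ei e).
    { destruct (proj2_sig y) as [l Hl]. exists l. intros i Hi. apply He, Hl, Hi. }
    exists (exist _ e supe). apply rdp_eq. simpl. apply functional_extensionality_dep. intro i. apply He.
  - intro a. split.
    + intro Ha.
      assert (Hai : forall i, marginal cs (proj1_sig a i)).
      { intro i. apply Hfi. apply (f_equal (fun b => proj1_sig b i)) in Ha. exact Ha. }
      intros x k. apply rdp_eq. apply functional_extensionality_dep. intro j.
      rewrite <- (poly_hom cs (@rdp_proj_hom I Ei j)), <- (poly_hom cs (@rdp_proj_hom I Ei j)).
      rewrite <- (Hai j (fun t => proj1_sig (x t) j) k).
      apply poly_ext. intro t. rewrite (@upd_map (rdp Ei) (Ei j) (fun b : rdp Ei => proj1_sig b j)). reflexivity.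
    + intro Ha. apply rdp_eq. apply functional_extensionality_dep. intro i. simpl.
      apply Hfi. intros y k.
      pose (x := fun t => delta Ei i (y t)).
      pose proof (f_equal (fun b : rdp Ei => proj1_sig b i) (Ha x k)) as K. cbv beta in K.
      rewrite <- (poly_hom cs (@rdp_proj_hom I Ei i)), <- (poly_hom cs (@rdp_proj_hom I Ei i)) in K.
      transitivity (polyword cs (fun t => proj1_sig (upd x k (gmul a (x k)) t) i)).
      * apply poly_ext. intro t. rewrite (@upd_map (rdp Ei) (Ei i) (fun b : rdp Ei => proj1_sig b i)).
        unfold upd. destruct (Nat.eqb t k); simpl; unfold x; [rewrite (delta_at Ei i (y k) : delta_fun Ei i (y k) i = y k)|rewrite (delta_at Ei i (y t) : delta_fun Ei i (y t) i = y t)]; reflexivity.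
      * rewrite K. apply poly_ext. intro t. unfold x. apply delta_at.
Qed.

Lemma proj_conj (I : Type) (G : I -> group) (x y : rdp G) j :
  proj1_sig (gconj x y) j = gconj (proj1_sig x j) (proj1_sig y j).
Proof. reflexivity. Qed.
Lemma proj_mul (I : Type) (G : I -> group) (x y : rdp G) j :
  proj1_sig (gmul x y) j = gmul (proj1_sig x j) (proj1_sig y j).
Proof. reflexivity. Qed.
Lemma proj_inv (I : Type) (G : I -> group) (x : rdp G) j :
  proj1_sig (ginv x) j = ginv (proj1_sig x j).
Proof. reflexivity. Qed.
Lemma proj_one (I : Type) (G : I -> group) j :
  proj1_sig (@gone (rdp G)) j = gone.
Proof. reflexivity. Qed.

Lemma dir1 (I : Type) (G : I -> group) (cs : list nat) (hperf : forall i, perfect (G i)) :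
  capable cs (rdp G) -> forall i, capable cs (G i).
Proof.
  intros [E [f [hf [hs hk]]]] i.
  assert (hk' : forall e, f e = gone -> marginal cs e) by (intros; apply hk; auto).
  set (Pi := fun e : E => forall j, j <> i -> proj1_sig (f e) j = gone).
  assert (P1 : Pi gone). { intros j _. rewrite (hom_one hf). reflexivity. }
  assert (PM : forall x y, Pi x -> Pi y -> Pi (gmul x y)).
  { intros x y Hx Hy j Hj. rewrite hf, proj_mul, Hx, Hy by auto. apply gmul1l. }
  assert (PI : forall x, Pi x -> Pi (ginv x)).
  { intros x Hx j Hj. rewrite (hom_inv hf), proj_inv, Hx by auto. apply ginv_one. }
  set (Ei := subgrp E Pi P1 PM PI).
  assert (hio : is_hom (fun a : Ei => proj1_sig a)) by (intros ? ?; reflexivity).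
  set (fi := fun e : Ei => proj1_sig (f (proj1_sig e)) i).
  assert (hfi : is_hom fi). { intros a b. unfold fi. simpl. rewrite hf. reflexivity. }
  assert (fsurj : forall y : G i, exists e : Ei, fi e = y).
  { intro y. destruct (hs (delta G i y)) as [e0 He0].
    assert (Pe : Pi e0). { intros j Hj. rewrite He0. apply delta_off; auto. }
    exists (exist _ e0 Pe). unfold fi. simpl. rewrite He0. apply delta_at. }
  assert (feq : forall u u' : Ei, fi u = fi u' -> f (proj1_sig u) = f (proj1_sig u')).
  { intros u u' Hu. apply rdp_eq. apply functional_extensionality_dep. intro j.
    destruct (classic (j = i)) as [->|n]. exact Hu.
    rewrite (proj2_sig u j n), (proj2_sig u' j n). reflexivity. }
  set (C := fun b : E => proj1_sig (f b) i = gone).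
  set (Z := fun z : E => forall b, C b -> gmul z b = gmul b z).
  assert (Zone : Z gone). { intros b _. rewrite gmul1l, gmul1r. reflexivity. }
  assert (Zmul : forall x y, Z x -> Z y -> Z (gmul x y)).
  { intros x y Hx Hy b Hb. rewrite <- gmulA, Hy, gmulA, Hx by auto. rewrite gmulA. reflexivity. }
  assert (Zinv : forall x, Z x -> Z (ginv x)).
  { intros x Hx b Hb. transitivity (gmul (ginv x) (gmul (gmul b x) (ginv x))).
    gsimpl. reflexivity. rewrite <- Hx by auto. gsimpl. reflexivity. }
  assert (Cone : C gone). { unfold C. rewrite (hom_one hf). reflexivity. }
  assert (Cmul : forall x y, C x -> C y -> C (gmul x y)).
  { intros x y Hx Hy. unfold C in *. rewrite hf, proj_mul, Hx, Hy. apply gmul1l. }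
  assert (Cinv : forall x, C x -> C (ginv x)).
  { intros x Hx. unfold C in *. rewrite (hom_inv hf), proj_inv, Hx. apply ginv_one. }
  assert (vals_commute : forall u : nat -> E, (forall t, Pi (u t)) -> Z (polyword cs u)).
  { intros u Hu b Hb.
    assert (K : gconj b (polyword cs u) = polyword cs u).
    { rewrite <- (poly_hom cs (conj_hom E b)). apply (same_image hf hk'). intro t.
      apply rdp_eq. apply functional_extensionality_dep. intro j.
      rewrite (hom_conj hf), proj_conj.
      destruct (classic (j = i)) as [->|n].
      - unfold C in Hb. rewrite Hb. unfold gconj. gsimpl. reflexivity.
      - rewrite (Hu t j n). unfold gconj. gsimpl. reflexivity. }
    transitivity (gmul b (gconj b (polyword cs u))).
    unfold gconj. gsimpl. reflexivity. rewrite K. reflexivity. }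
  assert (Zlemma : forall y : G i, exists z : Ei, Z (proj1_sig z) /\ fi z = y).
  { intro y. induction (perfect_gen (hperf i) cs y) as [y [w ->]| | y1 y2 _ [z1 [Z1 F1]] _ [z2 [Z2 F2]] | y1 _ [z1 [Z1 F1]]].
    - assert (HL : forall t, exists e : Ei, fi e = w t) by (intro; apply fsurj).
      pose (L := fun t => proj1_sig (constructive_indefinite_description _ (HL t))).
      assert (HL' : forall t, fi (L t) = w t).
      { intro t. exact (proj2_sig (constructive_indefinite_description _ (HL t))). }
      clearbody L. exists (polyword cs L). split.
      + rewrite <- (poly_hom cs hio). apply vals_commute. intro t. exact (proj2_sig (L t)).
      + rewrite <- (poly_hom cs hfi). apply poly_ext. auto.
    - exists gone. split. exact Zone. apply (hom_one hfi).
    - exists (gmul z1 z2). split. apply Zmul; auto. rewrite hfi, F1, F2. reflexivity.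
    - exists (ginv z1). split. apply Zinv; auto. rewrite (hom_inv hfi), F1. reflexivity. }
  assert (prodw : forall a c : nat -> E, (forall t, Z (a t)) -> (forall t, C (c t)) ->
            polyword cs (fun t => gmul (a t) (c t)) = gmul (polyword cs a) (polyword cs c)).
  { intros a c Ha Hc.
    set (Q := fun p : prodgrp E E => Z (fst p) /\ C (snd p)).
    assert (Q1 : Q gone). { split; simpl; auto. }
    assert (QM : forall x y, Q x -> Q y -> Q (gmul x y)).
    { intros x y [] []. split; simpl; auto. }
    assert (QI : forall x, Q x -> Q (ginv x)).
    { intros x []. split; simpl; auto. }
    set (H := subgrp (prodgrp E E) Q Q1 QM QI).
    set (phi := fun h : H => gmul (fst (proj1_sig h)) (snd (proj1_sig h))).
    assert (hphi : is_hom phi).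
    { intros [[x1 x2] [Hx1 Hx2]] [[y1 y2] [Hy1 Hy2]]. unfold phi. simpl in *.
      rewrite <- !gmulA. f_equal. rewrite !gmulA. f_equal. first [apply (Hy1 x2 Hx2) | symmetry; apply (Hy1 x2 Hx2)]. }
    assert (h1 : is_hom (fun h : H => fst (proj1_sig h))) by (intros ? ?; reflexivity).
    assert (h2 : is_hom (fun h : H => snd (proj1_sig h))) by (intros ? ?; reflexivity).
    pose (hh := fun t => exist Q (a t, c t) (Logic.conj (Ha t) (Hc t)) : H).
    transitivity (polyword cs (fun t => phi (hh t))). reflexivity.
    rewrite (poly_hom cs hphi). unfold phi.
    rewrite <- (poly_hom cs h1), <- (poly_hom cs h2). reflexivity. }
  exists Ei, fi. split; [exact hfi|split; [exact fsurj|]].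
  intro e. split.
  - intro He.
    assert (Hm : marginal cs (proj1_sig e)).
    { apply hk. apply rdp_eq. apply functional_extensionality_dep. intro j.
      destruct (classic (j = i)) as [->|n]. exact He. exact (proj2_sig e j n). }
    intros x k. apply sub_eq.
    rewrite <- !(poly_hom cs hio).
    rewrite <- (Hm (fun t => proj1_sig (x t)) k).
    apply poly_ext. intro t. rewrite (@upd_map Ei E (fun a : Ei => proj1_sig a)). reflexivity.
  - intro He.
    assert (Hm : marginal cs (proj1_sig e)).
    { intros x k.
      assert (HZ : forall t, exists z : Ei, Z (proj1_sig z) /\ fi z = proj1_sig (f (x t)) i)
        by (intro; apply Zlemma).
      pose (zz := fun t => proj1_sig (constructive_indefinite_description _ (HZ t))).
      assert (Hzz : forall t, Z (proj1_sig (zz t)) /\ fi (zz t) = proj1_sig (f (x t)) i).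
      { intro t. exact (proj2_sig (constructive_indefinite_description _ (HZ t))). }
      clearbody zz.
      set (c := fun t => gmul (ginv (proj1_sig (zz t))) (x t)).
      assert (Hc : forall t, C (c t)).
      { intro t. unfold C, c. rewrite hf, (hom_inv hf), proj_mul, proj_inv.
        destruct (Hzz t) as [_ F]. unfold fi in F. rewrite F. apply gmulVl. }
      destruct (Zlemma (fi (gmul e (zz k)))) as [z' [Zz' Fz']].
      set (a' := upd (fun t => proj1_sig (zz t)) k (proj1_sig z')).
      assert (Ha' : forall t, Z (a' t)).
      { intro t. unfold a', upd. destruct (Nat.eqb t k); auto. apply Hzz. }
      transitivity (polyword cs (fun t => gmul (a' t) (c t))).
      { apply (same_image hf hk'). intro t. unfold a', upd. destruct (Nat.eqb_spec t k) as [->|].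
        - rewrite (hf (proj1_sig z')), (feq _ _ Fz'), <- hf. f_equal. unfold c. simpl. gsimpl. reflexivity.
        - f_equal. unfold c. gsimpl. reflexivity. }
      rewrite prodw by auto.
      transitivity (gmul (polyword cs (fun t => proj1_sig (zz t))) (polyword cs c)).
      2:{ rewrite <- prodw by (auto; intro; apply Hzz). apply poly_ext. intro t. unfold c. gsimpl. reflexivity. }
      f_equal.
      transitivity (polyword cs (upd (fun t => proj1_sig (zz t)) k (gmul (proj1_sig e) (proj1_sig (zz k))))).
      { apply (same_image hf hk'). intro t. unfold a', upd. destruct (Nat.eqb t k); auto.
        apply (feq _ _ Fz'). }
      transitivity (polyword cs (fun t => proj1_sig (upd zz k (gmul e (zz k)) t))).
      { apply poly_ext. intro t. rewrite (@upd_map Ei E (fun a : Ei => proj1_sig a)). reflexivity. }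
      rewrite (poly_hom cs hio), He, <- (poly_hom cs hio). reflexivity. }
    unfold fi. apply hk in Hm. rewrite Hm. reflexivity.
Qed.

Theorem mainTheorem5 (I : Type) (G : I -> group) (cs : list nat)
  (hcs : cs <> nil) (hc : forall c, In c cs -> 1 <= c)
  (hperf : forall i, perfect (G i)) :
  capable cs (rdp G) <-> (forall i, capable cs (G i)).
Proof.
  split. apply dir1; auto. apply dir2.
Qed.
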